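(* Let $\bm A\in\mathbb{R}^{n\times n}$ be a graph adjacency matrix as in the context, and let $\bm M\in\{0,1\}^{n\times d}$ be a fixed (non-random) mask matrix such that every column $j$ contains at least one observed entry, i.e. $S_j:=\{1\le k\le n : \bm M_{k,j}=1\}\neq\emptyset$. Let $\bm X\in\mathbb{R}^{n\times d}$ be a random matrix whose entries $\bm X_{i,j}$ are independent and identically distributed with $\mathbb{E}(\bm X_{i,j})=0$ and $\mathrm{Var}(\bm X_{i,j})=1$. Define the imputed matrix $\hat{\bm X}\in\mathbb{R}^{n\times d}$ by $\hat{\bm X}_{i,j}=\bm X_{i,j}$ if $\bm M_{i,j}=1$, and, if $\bm M_{i,j}=0$, by $$\hat{\bm X}_{i,j}=\sum_{k\in S_j}\alpha^{(i,j)}_k\,\bm X_{k,j},$$ where for each missing position $(i,j)$ the weights $\alpha^{(i,j)}_k$ are fixed (non-random) real numbers with $\alpha^{(i,j)}_k\ge 0$ and $\sum_{k\in S_j}\alpha^{(i,j)}_k=1$ (i.e. each missing entry is filled by a convex combination of observed entries of the same column). Then $$\mathbb{E}\big[E_D(\hat{\bm X})\big]\le \mathbb{E}\big[E_D(\bm X)\big].$$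
   Context: A graph on $n$ nodes is given by an adjacency matrix $\bm A\in\mathbb{R}^{n\times n}$ that is symmetric, has nonnegative entries and zero diagonal. $\bm D$ is the diagonal degree matrix with $\bm D_{i,i}=\sum_j \bm A_{i,j}$. Set $\tilde{\bm A}=\bm A+\bm I_n$, $\tilde{\bm D}=\bm D+\bm I_n$, and the augmented normalized Laplacian $\tilde{\Delta}=\bm I_n-\tilde{\bm D}^{-1/2}\tilde{\bm A}\tilde{\bm D}^{-1/2}$. For a feature matrix $\bm X\in\mathbb{R}^{n\times d}$ (row $i$ = features of node $i$), the graph Dirichlet energy is $$E_D(\bm X)=\mathrm{tr}\big(\bm X^T\tilde{\Delta}\bm X\big)=\frac12\sum_{i,j=1}^n \bm A_{i,j}\Big\|\frac{\bm X_{i,:}}{\sqrt{1+\bm D_{i,i}}}-\frac{\bm X_{j,:}}{\sqrt{1+\bm D_{j,j}}}\Big\|^2,$$ with $\|\cdot\|$ the Euclidean norm. A mask matrix $\bm M\in\{0,1\}^{n\times d}$ indicates that entry $\bm X_{i,j}$ is observed iff $\bm M_{i,j}=1$. *)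

(* Defs.v *)
From HB Require Import structures.
From mathcomp Require Import all_boot all_order all_algebra.
From mathcomp Require Import all_classical all_reals all_analysis.
Set Implicit Arguments. Unset Strict Implicit. Unset Printing Implicit Defensive.
Import Order.TTheory GRing.Theory Num.Theory.
Local Open Scope classical_set_scope.
Local Open Scope ring_scope.

Definition is_adjacency (R : realType) (n : nat) (A : 'M[R]_n) : Prop :=
  A^T = A /\ (forall i j, 0 <= A i j) /\ (forall i, A i i = 0).

Definition deg (R : realType) (n : nat) (A : 'M[R]_n) (i : 'I_n) : R :=
  \sum_(j < n) A i j.

(* augmented normalized Laplacian  I - D~^{-1/2} A~ D~^{-1/2},
   with A~ = A + I, D~ = D + I *)
Definition aug_laplacian (R : realType) (n : nat) (A : 'M[R]_n) : 'M[R]_n :=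
  \matrix_(i, j) ((i == j)%:R -
     (A i j + (i == j)%:R) / (Num.sqrt (1 + deg A i) * Num.sqrt (1 + deg A j))).

Definition dirichlet_energy (R : realType) (n d : nat) (A : 'M[R]_n)
  (X : 'M[R]_(n, d)) : R :=
  \tr (X^T *m aug_laplacian A *m X).

Definition mutually_independent {dT} {T : measurableType dT} (R : realType)
  (P : probability T R) (I : finType) (X : I -> T -> R) : Prop :=
  forall (J : {set I}) (B : I -> set R),
    (forall i, measurable (B i)) ->
    P (\bigcap_(i in [set` J]) (X i @^-1` B i)) =
    (\prod_(i in J) P (X i @^-1` B i))%E.

Definition identically_distributed {dT} {T : measurableType dT} (R : realType)
  (P : probability T R) (I : Type) (X : I -> T -> R) : Prop :=
  forall i k (B : set R), measurable B -> P (X i @^-1` B) = P (X k @^-1` B).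

Definition imputed (R : realType) (n d : nat) (M : 'M[bool]_(n, d))
  (alpha : 'I_n -> 'I_d -> 'I_n -> R) (X : 'M[R]_(n, d)) : 'M[R]_(n, d) :=
  \matrix_(i, j) (if M i j then X i j
                  else \sum_(k < n | M k j) alpha i j k * X k j).

(* Main.v *)
Require Import Defs.
From HB Require Import structures.
From mathcomp Require Import all_boot all_order all_algebra.
From mathcomp Require Import all_classical all_reals all_analysis.
From mathcomp Require Import measurable_realfun.
From mathcomp Require Import ring lra.
Import Order.TTheory GRing.Theory Num.Theory.
Local Open Scope classical_set_scope.
Local Open Scope ring_scope.

Set Implicit Arguments. Unset Strict Implicit.
Section indep.
Context (R : realType) (dT : measure_display) (T : measurableType dT) (P : probability T R).

Definition indep2 (X Y : T -> R) := forall A B : set R, measurable A -> measurable B ->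
  P (X @^-1` A `&` Y @^-1` B) = (P (X @^-1` A) * P (Y @^-1` B))%E.

Definition mkRV (X : T -> R) (mX : measurable_fun setT X) : {RV P >-> R} :=
  mfun_Sub (mem_set mX : X \in mfun).

Lemma mkRVE (X : T -> R) (mX : measurable_fun setT X) : (mkRV mX : T -> R) = X.
Proof. by []. Qed.

Let mu : {measure set _ -> \bar R} := @lebesgue_measure R.

Lemma E_ccdf (X : T -> R) : measurable_fun setT X -> (forall x, 0 <= X x) ->
  ('E_P[X] = \int[mu]_(r in `[0%R, +oo[) P (X @^-1` `]r, +oo[))%E.
Proof.
move=> mX X0; have := @ge0_expectation_ccdf _ _ _ P (mkRV mX) X0.
by rewrite mkRVE.
Qed.

Local Open Scope ereal_scope.
Lemma mP_ccdf (X : T -> R) : measurable_fun setT X ->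
  measurable_fun [set: R] (fun r : R => P (X @^-1` `]r, +oo[)).
Proof. move=> mX; exact: (@ccdf_measurable _ _ _ P (mkRV mX)). Qed.
Lemma E_indic (X Y : T -> R) (C : set R) : measurable_fun setT X -> measurable_fun setT Y ->
  (forall x, (0 <= X x)%R) -> indep2 X Y -> measurable C ->
  'E_P[fun w => (X w * \1_(Y @^-1` C) w)%R] = 'E_P[X] * P (Y @^-1` C).
Proof.
move=> mX mY X0 iXY mC.
have mB : measurable (Y @^-1` C) by rewrite -[Y @^-1` C]setTI; exact: mY.
have mZ : measurable_fun setT (fun w => X w * \1_(Y @^-1` C) w)%R.
  by apply: measurable_funM => //; exact: measurable_indic.
have Z0 : forall w, (0 <= X w * \1_(Y @^-1` C) w)%R.
  by move=> w; rewrite mulr_ge0// indicE ler0n.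
rewrite (E_ccdf mZ Z0) (E_ccdf mX X0).
rewrite -ge0_integralZr//; last first.
  have h := mP_ccdf mX; exact: measurable_funTS.
apply: eq_integral => r; rewrite inE /= in_itv /= andbT => r0.
rewrite -iXY //.
congr (P _); apply/seteqP; split => w /=; rewrite !in_itv /= !andbT indicE.
- case: (boolP (w \in Y @^-1` C)) => wB; last by rewrite mulr0 ltNge r0.
  by rewrite mulr1 => Xr; split => //; move: wB; rewrite inE.
- case=> Xr wC; have -> : w \in Y @^-1` C by rewrite inE.
  by rewrite mulr1.
Qed.
Lemma E_prod_ge0 (X Y : T -> R) : measurable_fun setT X -> measurable_fun setT Y ->
  (forall x, (0 <= X x)%R) -> (forall x, (0 <= Y x)%R) -> indep2 X Y ->
  'E_P[fun w => (X w * Y w)%R] = 'E_P[X] * 'E_P[Y].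
Proof.
move=> mX mY X0 Y0 iXY.
pose GR := measurableTypeR R.
transitivity (\int[P]_w \int[mu]_s (X w * \1_`[0%R, Y w[ s)%:E).
  rewrite unlock; apply: eq_integral => w _.
  under eq_integral do rewrite EFinM.
  rewrite ge0_integralZl//= ?lee_fin//; last first.
    by apply/measurable_EFinP; exact: measurable_indic.
  rewrite integral_indic//= setIT lebesgue_measure_itv/= lte_fin.
  have [Yp|Yn] := ltP 0%R (Y w).
    by rewrite oppr0 adde0 -EFinM.
  have -> : Y w = 0%R by apply/le_anti; rewrite Yn Y0.
  by rewrite mulr0 mule0.
rewrite (fubini_tonelli (fun p : T * GR => (X p.1 * \1_`[0%R, Y p.1[ p.2)%:E))//=; last 2 first.
- apply/measurable_EFinP; apply: measurable_funM.
    exact: (measurableT_comp mX measurable_fst).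
  rewrite (_ : (fun p : T * GR => \1_`[0%R, Y p.1[ p.2) =
     \1_([set p : T * GR | (`[0%R, Y p.1[%classic : set R) p.2])); last first.
    by apply/funext => p; rewrite !indicE.
  apply: measurable_indic.
  rewrite [X in measurable X](_ : _ = [set p : T * GR | (0 <= p.2)%R] `&` [set p : T * GR | (p.2 < Y p.1)%R]).
    apply: measurableI.
    - have : measurable_fun setT (fun p : T * GR => (0 <= p.2)%R).
        exact: measurable_fun_ler.
      by move=> /(_ measurableT [set true]); rewrite setTI; exact.
    - have : measurable_fun setT (fun p : T * GR => (p.2 < Y p.1)%R).
        apply: measurable_fun_ltr => //.
        exact: (measurableT_comp mY measurable_fst).
      by move=> /(_ measurableT [set true]); rewrite setTI; exact.
  by apply/seteqP; split => p; rewrite /= in_itv/= => /andP.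
- by move=> p; rewrite lee_fin mulr_ge0// indicE ler0n.
transitivity (\int[mu]_(s in `[0%R, +oo[) ('E_P[X] * P (Y @^-1` `]s, +oo[))).
  rewrite [RHS]integral_mkcond; apply: eq_integral => s _; rewrite patchE.
  case: ifPn => s0.
  - move/set_mem: s0; rewrite /= in_itv/= andbT => s0.
    rewrite -E_indic//; rewrite unlock; apply: eq_integral => w _; rewrite !indicE.
    have [sY|sY] := ltP s (Y w).
    + rewrite mem_set; last by rewrite /= in_itv/= sY s0.
      by rewrite mem_set//= in_itv/= sY.
    + rewrite memNset; last by rewrite /= in_itv/= ltNge sY andbF.
      by rewrite memNset//= in_itv/= ltNge sY.
  - have {}s0 : (s < 0)%R.
      rewrite ltNge; apply: contra s0 => s0; apply/mem_set; by rewrite /= in_itv/= s0.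
    have -> : (point : \bar R) = 0 by [].
    by apply: integral0_eq => w _; rewrite indicE memNset ?mulr0//= in_itv/= leNgt s0.
rewrite ge0_integralZl//; last first.
- exact: expectation_ge0.
- have h := mP_ccdf mY; exact: measurable_funTS.
by rewrite -E_ccdf.
Qed.
Lemma indep_comp (X Y : T -> R) (g h : R -> R) : measurable_fun setT g -> measurable_fun setT h ->
  indep2 X Y -> indep2 (g \o X) (h \o Y).
Proof.
move=> mg mh iXY A B mA mB.
have mgA : measurable (g @^-1` A) by rewrite -[g @^-1` A]setTI; exact: mg.
have mhB : measurable (h @^-1` B) by rewrite -[h @^-1` B]setTI; exact: mh.
exact: (iXY _ _ mgA mhB).
Qed.

Lemma ge0_fin_Lfun1 (Z : T -> R) : measurable_fun setT Z -> (forall w, (0 <= Z w)%R) ->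
  'E_P[Z] \is a fin_num -> Z \in Lfun P 1.
Proof.
move=> mZ Z0 fZ; apply/Lfun1_integrable; apply/integrableP; split.
  exact/measurable_EFinP.
rewrite (@eq_integral _ _ _ P setT (EFin \o Z)); last first.
  by move=> w _; rewrite /= ger0_norm.
move: fZ; rewrite unlock ge0_fin_numE //.
by apply: integral_ge0 => w _; rewrite lee_fin.
Qed.

Lemma Lfun1_mfun (Z : T -> R) : Z \in Lfun P 1 -> measurable_fun setT Z.
Proof. by move/Lfun1_integrable/integrableP => [/measurable_EFinP]. Qed.

Lemma Lfun1_pos (Z : T -> R) : Z \in Lfun P 1 -> (Z^\+)%R \in Lfun P 1.
Proof.
by move/Lfun1_integrable => h; apply/Lfun1_integrable; exact: integrable_funrpos.
Qed.

Lemma Lfun1_neg (Z : T -> R) : Z \in Lfun P 1 -> (Z^\-)%R \in Lfun P 1.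
Proof.
by move/Lfun1_integrable => h; apply/Lfun1_integrable; exact: integrable_funrneg.
Qed.

Lemma posneg (Z : T -> R) w : Z w = (Z^\+ w - Z^\- w)%R.
Proof. by rewrite -[LHS](congr1 (fun f => f w) (funrposBneg Z)). Qed.

Lemma E_prod (X Y : T -> R) : X \in Lfun P 1 -> Y \in Lfun P 1 -> indep2 X Y ->
  (fun w => X w * Y w)%R \in Lfun P 1 /\
  'E_P[fun w => (X w * Y w)%R] = 'E_P[X] * 'E_P[Y].
Proof.
move=> lX lY iXY.
have mX := Lfun1_mfun lX; have mY := Lfun1_mfun lY.
have mid : measurable_fun [set: R] (@id R) by exact: measurable_id.
have mp : measurable_fun [set: R] ((@id R)^\+)%R by exact: measurable_funrpos.
have mn : measurable_fun [set: R] ((@id R)^\-)%R by exact: measurable_funrneg.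
have mXp : measurable_fun setT (X^\+)%R by exact: measurable_funrpos.
have mXn : measurable_fun setT (X^\-)%R by exact: measurable_funrneg.
have mYp : measurable_fun setT (Y^\+)%R by exact: measurable_funrpos.
have mYn : measurable_fun setT (Y^\-)%R by exact: measurable_funrneg.
have lXp := Lfun1_pos lX; have lXn := Lfun1_neg lX.
have lYp := Lfun1_pos lY; have lYn := Lfun1_neg lY.
have fXp := expectation_fin_num lXp; have fXn := expectation_fin_num lXn.
have fYp := expectation_fin_num lYp; have fYn := expectation_fin_num lYn.
have key : forall (U V : T -> R), measurable_fun setT U -> measurable_fun setT V ->
    (forall w, 0 <= U w)%R -> (forall w, 0 <= V w)%R -> indep2 U V ->
    'E_P[U] \is a fin_num -> 'E_P[V] \is a fin_num ->
    (fun w => U w * V w)%R \in Lfun P 1 /\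
    'E_P[fun w => (U w * V w)%R] = 'E_P[U] * 'E_P[V].
  move=> U V mU mV U0 V0 iUV fU fV.
  have E := E_prod_ge0 mU mV U0 V0 iUV.
  split => //; apply: ge0_fin_Lfun1.
  - exact: measurable_funM.
  - by move=> w; exact: mulr_ge0.
  - by rewrite E fin_numM.
have [l11 e11] := key _ _ mXp mYp (funrpos_ge0 X) (funrpos_ge0 Y)
  (indep_comp mp mp iXY) fXp fYp.
have [l12 e12] := key _ _ mXp mYn (funrpos_ge0 X) (funrneg_ge0 Y)
  (indep_comp mp mn iXY) fXp fYn.
have [l21 e21] := key _ _ mXn mYp (funrneg_ge0 X) (funrpos_ge0 Y)
  (indep_comp mn mp iXY) fXn fYp.
have [l22 e22] := key _ _ mXn mYn (funrneg_ge0 X) (funrneg_ge0 Y)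
  (indep_comp mn mn iXY) fXn fYn.
pose f11 := (fun w => X^\+ w * Y^\+ w)%R.
pose f12 := (fun w => X^\+ w * Y^\- w)%R.
pose f21 := (fun w => X^\- w * Y^\+ w)%R.
pose f22 := (fun w => X^\- w * Y^\- w)%R.
have eXY : (fun w => X w * Y w)%R = ((f11 \+ f22) \- (f12 \+ f21))%R.
  by apply/funext => w /=; rewrite /f11 /f12 /f21 /f22 (posneg X) (posneg Y); ring.
have lXY : (fun w => X w * Y w)%R \in Lfun P 1.
  by rewrite eXY; apply: rpredB; apply: rpredD.
split => //.
rewrite eXY expectationB ?rpredD// !expectationD// e11 e12 e21 e22.
have -> : 'E_P[X] = 'E_P[X^\+%R] - 'E_P[X^\-%R].
  by rewrite -expectationB//; congr expectation; apply/funext => w; rewrite /= -posneg.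
have -> : 'E_P[Y] = 'E_P[Y^\+%R] - 'E_P[Y^\-%R].
  by rewrite -expectationB//; congr expectation; apply/funext => w; rewrite /= -posneg.
rewrite -(fineK fXp) -(fineK fXn) -(fineK fYp) -(fineK fYn).
by rewrite -!EFinM -!EFinD; congr EFin; ring.
Qed.
Lemma indep_of_mutual (I : finType) (F : I -> T -> R) (p q : I) :
  mutually_independent P F -> p != q -> indep2 (F p) (F q).
Proof.
move=> mi pq A B mA mB.
pose G i := if i == p then A else if i == q then B else setT.
have mG : forall i, measurable (G i).
  by move=> i; rewrite /G; case: ifP => // _; case: ifP.
have := mi [set p; q]%SET G mG.
have qp : q != p by rewrite eq_sym.
rewrite big_setU1 ?inE// /= big_set1 {2 3}/G eqxx (negbTE qp) eqxx.
move=> <-; congr (P _); apply/seteqP; split => w /=.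
- move=> [hA hB] i; rewrite /= in_set2 => /orP[/eqP->|/eqP->].
    by rewrite /G eqxx.
  by rewrite /G (negbTE qp) eqxx.
- move=> h; split.
    by have := h p; rewrite /= in_set2 eqxx /G eqxx => /(_ isT).
  by have := h q; rewrite /= in_set2 eqxx orbT /G (negbTE qp) eqxx => /(_ isT).
Qed.
Lemma E_sum (I : Type) (r : seq I) (F : I -> T -> R) (v : I -> R) :
  (forall i, F i \in Lfun P 1 /\ 'E_P[F i] = (v i)%:E) ->
  (fun w => \sum_(i <- r) F i w)%R \in Lfun P 1 /\
  'E_P[fun w => (\sum_(i <- r) F i w)%R] = (\sum_(i <- r) v i)%:E.
Proof.
move=> h; elim: r => [|i r [l e]].
  have -> : (fun w => \sum_(i <- [::]) F i w)%R = cst 0%R.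
    by apply/funext => w; rewrite big_nil.
  by rewrite big_nil; split; [exact: Lfun_cst | exact: expectation_cst].
have -> : (fun w => \sum_(j <- i :: r) F j w)%R = (F i \+ fun w => \sum_(j <- r) F j w)%R.
  by apply/funext => w; rewrite big_cons.
have [li ei] := h i.
split; first exact: rpredD.
by rewrite expectationD// ei e big_cons EFinD.
Qed.

Lemma E_scale (F : T -> R) (c v : R) : F \in Lfun P 1 /\ 'E_P[F] = v%:E ->
  (fun w => c * F w)%R \in Lfun P 1 /\ 'E_P[fun w => (c * F w)%R] = (c * v)%:E.
Proof.
move=> [l e].
have -> : (fun w => c * F w)%R = (c \o* F)%R by apply/funext => w; rewrite /= mulrC.
split; first exact: (@Lfun_scale _ _ _ P F c 1%R (lexx _) l).
by rewrite (expectationZl c l) e.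
Qed.
End indep.

Section alg.
Context (R : realType) (n d : nat) (A : 'M[R]_n).
Local Notation L := (aug_laplacian A).

Lemma energy_expand (Y : 'M[R]_(n, d)) : dirichlet_energy A Y =
  \sum_(j < d) \sum_(i < n) \sum_(l < n) L i l * (Y i j * Y l j).
Proof.
rewrite /dirichlet_energy /mxtrace; apply: eq_bigr => j _.
rewrite mxE; under eq_bigr => l _ do rewrite mxE big_distrl /=.
rewrite exchange_big; apply: eq_bigr => i _; apply: eq_bigr => l _.
by rewrite !mxE; ring.
Qed.

Lemma sum_delta (k : 'I_n) (c : 'I_n -> R) : \sum_(k' < n) c k' * (k == k')%:R = c k.
Proof.
rewrite (bigD1 k)//= eqxx mulr1 big1 ?addr0// => k' /negbTE.
by rewrite eq_sym => ->; rewrite mulr0.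
Qed.

Lemma sum_delta' (k : 'I_n) (c : 'I_n -> R) : \sum_(k' < n) (k' == k)%:R * c k' = c k.
Proof.
rewrite (bigD1 k)//= eqxx mul1r big1 ?addr0// => k' /negbTE ->.
by rewrite mul0r.
Qed.

Hypothesis adjA : is_adjacency A.

Lemma deg_ge0 i : 0 <= deg A i.
Proof. by apply: sumr_ge0 => j _; case: adjA => _ [h _]; exact: h. Qed.

Lemma sqrt_sq i : Num.sqrt (1 + deg A i) * Num.sqrt (1 + deg A i) = 1 + deg A i.
Proof. by rewrite -expr2 sqr_sqrtr// addr_ge0// deg_ge0. Qed.

Lemma L_diag i : L i i = 1 - (1 + deg A i)^-1.
Proof.
by rewrite mxE eqxx sqrt_sq; case: adjA => _ [_ h]; rewrite h add0r div1r.
Qed.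

Lemma L_diag_ge0 i : 0 <= L i i.
Proof.
have h : 0 < 1 + deg A i by rewrite ltr_pwDl// deg_ge0.
by rewrite L_diag subr_ge0 invr_le1 ?lerDl ?deg_ge0// unitf_gt0.
Qed.

Lemma L_off_le0 i l : i != l -> L i l <= 0.
Proof.
move=> /negbTE il; rewrite mxE il addr0 sub0r oppr_le0.
apply: divr_ge0; first by case: adjA => _ [h _]; exact: h.
by apply: mulr_ge0; exact: sqrtr_ge0.
Qed.

Lemma term_le i l g : 0 <= g -> (i == l -> g <= 1) ->
  L i l * g <= L i l * (i == l)%:R.
Proof.
move=> g0 g1; case: (eqVneq i l) => [il|il].
  have g1' : g <= 1 by apply: g1; rewrite il.
  by rewrite -il mulr1 ler_piMr// L_diag_ge0.
by rewrite mulr0 mulr_le0_ge0// L_off_le0.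
Qed.

Lemma quad_le (b : 'I_d -> 'I_n -> 'I_n -> R) :
  (forall j i k, 0 <= b j i k) -> (forall j i, \sum_(k < n) b j i k * b j i k <= 1) ->
  \sum_(j < d) \sum_(i < n) \sum_(l < n) \sum_(k < n) \sum_(k' < n)
     L i l * b j i k * b j l k' * (k == k')%:R <=
  \sum_(j < d) \sum_(i < n) \sum_(l < n) \sum_(k < n) \sum_(k' < n)
     L i l * (k == i)%:R * (k' == l)%:R * (k == k')%:R.
Proof.
move=> b0 b1; apply: ler_sum => j _; apply: ler_sum => i _; apply: ler_sum => l _.
under eq_bigr => k _ do rewrite (sum_delta k (fun k' => L i l * b j i k * b j l k')).
under [X in _ <= X]eq_bigr => k _ do
  rewrite (sum_delta k (fun k' => L i l * (k == i)%:R * (k' == l)%:R)).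
have -> : \sum_(k < n) L i l * (k == i)%:R * (k == l)%:R = L i l * (i == l)%:R.
  rewrite -(sum_delta' i (fun k => L i l * (k == l)%:R)).
  by apply: eq_bigr => k _; ring.
have -> : \sum_(k < n) L i l * b j i k * b j l k = L i l * \sum_(k < n) b j i k * b j l k.
  by rewrite mulr_sumr; apply: eq_bigr => k _; ring.
apply: term_le.
  by apply: sumr_ge0 => k _; apply: mulr_ge0.
by move=> /eqP <-.
Qed.
End alg.

Section beta.
Context (R : realType) (n d : nat) (M : 'M[bool]_(n, d)) (alpha : 'I_n -> 'I_d -> 'I_n -> R).

Definition beta (j : 'I_d) (i k : 'I_n) : R :=
  if M i j then (k == i)%:R else (M k j)%:R * alpha i j k.

Lemma imputed_beta (Y : 'M[R]_(n, d)) i j :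
  imputed M alpha Y i j = \sum_(k < n) beta j i k * Y k j.
Proof.
rewrite mxE /beta; case: ifP => Mij.
  by rewrite (sum_delta' i (fun k => Y k j)).
rewrite big_mkcond; apply: eq_bigr => k _.
by case: (M k j); rewrite ?mul1r ?mul0r.
Qed.

Hypothesis Ha : forall i j, ~~ M i j ->
     (forall k, M k j -> 0 <= alpha i j k) /\
     \sum_(k < n | M k j) alpha i j k = 1.

Lemma beta_ge0 j i k : 0 <= beta j i k.
Proof.
rewrite /beta; case: ifP => Mij; first by rewrite ler0n.
case Mkj: (M k j); last by rewrite mul0r.
have [h _] := Ha (negbT Mij).
by rewrite mul1r h.
Qed.

Lemma beta_sum j i : \sum_(k < n) beta j i k = 1.
Proof.
rewrite /beta; case Mij: (M i j).
  have h := sum_delta' i (fun _ => 1 : R); rewrite /= in h.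
  by rewrite -[RHS]h; apply: eq_bigr => k _; rewrite mulr1.
transitivity (\sum_(k < n | M k j) alpha i j k); last by have [_ ->] := Ha (negbT Mij).
rewrite [RHS]big_mkcond; apply: eq_bigr => k _.
by case: (M k j); rewrite ?mul1r ?mul0r.
Qed.

Lemma beta_sq j i : \sum_(k < n) beta j i k * beta j i k <= 1.
Proof.
rewrite -(beta_sum j i); apply: ler_sum => k _.
apply: ler_piMr; first exact: beta_ge0.
rewrite -(beta_sum j i) (bigD1 k)//= lerDl.
by apply: sumr_ge0 => k' _; exact: beta_ge0.
Qed.

End beta.

Unset Implicit Arguments.

Theorem proposition3p2 (R : realType) (n d : nat) (A : 'M[R]_n)
  (M : 'M[bool]_(n, d)) (alpha : 'I_n -> 'I_d -> 'I_n -> R)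
  (dT : measure_display) (T : measurableType dT) (P : probability T R)
  (X : 'I_n * 'I_d -> {RV P >-> R}) :
  is_adjacency A ->
  (forall j : 'I_d, exists k : 'I_n, M k j) ->
  (forall i j, ~~ M i j ->
     (forall k, M k j -> 0 <= alpha i j k) /\
     \sum_(k < n | M k j) alpha i j k = 1) ->
  mutually_independent P (fun p => (X p : T -> R)) ->
  identically_distributed P (fun p => (X p : T -> R)) ->
  (forall p, (X p : T -> R) \in Lfun P 2%:E) ->
  (forall p, ('E_P[X p] = 0)%E) ->
  (forall p, ('V_P[X p] = 1)%E) ->
  ('E_P[fun w => dirichlet_energy A
          (imputed M alpha (\matrix_(i, j) X (i, j) w))]
   <= 'E_P[fun w => dirichlet_energy A (\matrix_(i, j) X (i, j) w)])%E.
Proof.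
move=> adjA _ Ha mi _ L2 E0 V1.
pose x := fun p => (X p : T -> R).
have L1 : forall p, x p \in Lfun P 1.
  by move=> p; apply: Lfun_subset12; [exact: (fin_num_measure P setT measurableT) | exact: L2].
have cov : forall p q, (fun w => x p w * x q w) \in Lfun P 1 /\
    ('E_P[fun w => (x p w * x q w)%R] = ((p == q)%:R)%:E)%E.
  move=> p q; case: (eqVneq p q) => [<-|pq].
    split; first by have h := Lfun2_mul_Lfun1 (L2 p) (L2 p); exact h.
    have := V1 p; rewrite varianceE// E0 expe2 mule0 sube0 => <-.
    by congr expectation; apply/funext => w; rewrite /= expr2.
  have [l e] := E_prod (L1 p) (L1 q) (indep_of_mutual mi pq).
  by split => //; rewrite e /x !E0 mule0.
have Een : forall b : 'I_d -> 'I_n -> 'I_n -> R,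
  ('E_P[fun w => dirichlet_energy A (\matrix_(i, j) (\sum_(k < n) b j i k * x (k, j) w)%R)] =
   (\sum_(j < d) \sum_(i < n) \sum_(l < n) \sum_(k < n) \sum_(k' < n)
     aug_laplacian A i l * b j i k * b j l k' * (k == k')%:R)%R%:E)%E.
  move=> b.
  have -> : (fun w => dirichlet_energy A (\matrix_(i, j) \sum_(k < n) b j i k * x (k, j) w)) =
    (fun w => \sum_(j < d) \sum_(i < n) \sum_(l < n) \sum_(k < n) \sum_(k' < n)
       (aug_laplacian A i l * b j i k * b j l k') * (x (k, j) w * x (k', j) w)).
    apply/funext => w; rewrite energy_expand; apply: eq_bigr => j _.
    apply: eq_bigr => i _; apply: eq_bigr => l _.
    rewrite !mxE big_distrl /= big_distrr /=; apply: eq_bigr => k _.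
    rewrite big_distrr /= big_distrr /=; apply: eq_bigr => k' _; ring.
  apply: proj2.
  apply: E_sum => j; apply: E_sum => i; apply: E_sum => l; apply: E_sum => k.
  apply: E_sum => k'; apply: E_scale.
  by have := cov (k, j) (k', j); rewrite xpair_eqE eqxx andbT.
have -> : (fun w => dirichlet_energy A (imputed M alpha (\matrix_(i, j) X (i, j) w))) =
  (fun w => dirichlet_energy A (\matrix_(i, j) \sum_(k < n) beta M alpha j i k * x (k, j) w)).
  apply/funext => w; congr dirichlet_energy; apply/matrixP => i j.
  rewrite imputed_beta mxE; apply: eq_bigr => k _; by rewrite mxE.
have -> : (fun w => dirichlet_energy A (\matrix_(i, j) X (i, j) w)) =
  (fun w => dirichlet_energy A (\matrix_(i, j) \sum_(k < n) (k == i)%:R * x (k, j) w)).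
  apply/funext => w; congr dirichlet_energy; apply/matrixP => i j.
  by rewrite !mxE (sum_delta' i (fun k => x (k, j) w)).
rewrite !Een lee_fin; apply: quad_le => //.
- by move=> j i k; exact: beta_ge0.
- by move=> j i; exact: beta_sq.
Qed.
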